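(* Let $\mathcal{L}$ be a GSOS language (a signature of operators together with a set of GSOS rules over labels $\Delta_\tau$) that is in the simply WB cool format. Then the GSOS law $\rho:\Sigma(\mathrm{Id}\times T)\Rightarrow T\Sigma^{*}$ on $\mathbf{Set}$ induced by $\mathcal{L}$, with $T=\mathcal{P}_c(\Delta_\tau\times\mathrm{Id})$ carrying the monad structure described below (equivalently its extension $\lambda:\Sigma^{*}(\mathrm{Id}\times T)\Rightarrow T\Sigma^{*}$ with $\rho=\lambda\circ\theta$), satisfies continuity, unitality and observability.
   Context: Labels: $\Delta_\tau=\Delta\cup\overline{\Delta}\cup\{\tau\}$ with $\tau$ the internal action. $\Sigma$ is the polynomial $\mathbf{Set}$-functor of the signature, $\Sigma^{*}X$ the set of terms over $X$, $\theta:\Sigma\Rightarrow\Sigma^{*}$ the inclusion of one-layer terms. $\mathcal{P}_c$ is the countable powerset. The monad $T=\mathcal{P}_c(\Delta_\tau\times\mathrm{Id})$ has unit $\eta(x)=\{(\tau,x)\}$ and Kleisli composition $(g\diamond f)(x)=\{(\delta,z)\mid (\delta_1,y)\in f(x),(\delta_2,z)\in g(y),\ \text{and }(\delta_1=\tau,\delta=\delta_2)\text{ or }(\delta_2=\tau,\delta=\delta_1)\}$; Kleisli hom-sets are ordered pointwise by inclusion ($f\le g$ iff $f(x)\subseteq g(x)$ for all $x$), with joins and suprema of chains given by pointwise unions. For a Kleisli endomorphism $\alpha:X\to TX$ its rt-closure is $\alpha^{*}=\bigvee_{n<\omega}(\eta_X\vee\alpha)^n$ (Kleisli powers). GSOS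 rules have the form $\frac{\{x_i\xrightarrow{c}y\}\ \cup\ \{x_i\not\xrightarrow{c}\}}{o(x_1,\dots,x_n)\xrightarrow{\alpha}t}$ with distinct variables, $t$ a term over the $x_i$ and the premise targets $y$; the induced law sends $o((x_1,W_1),\dots,(x_n,W_n))$ (with $W_i\subseteq\Delta_\tau\times X$) to the set of all $(\alpha,t[\ldots])$ obtained from rules of $o$ whose premises are satisfied by the $W_i$ (positive premise $x_i\xrightarrow{c}y$ satisfied by choosing $(c,y')\in W_i$ and substituting $y'$ for $y$). A rule with premise $x_i\xrightarrow{\tau}y$ and conclusion $o(x_1,\dots,x_n)\xrightarrow{\tau}o(x_1,\dots,x_n)[y/x_i]$ is a patience rule for argument $i$ of $o$. An operator is straight if it has no rule in which a variable occurs more than once in the left-hand sides of the premises; smooth if it is straight and has no rule in which a variable occurs both in the target and in the left-hand side of a premise. Argument $i$ of $o$ is active if some rule of $o$ has $x_i$ as left-hand side of a premise. A variable $x$ is receiving in a term $t$ if $t$ is the target of a rule in which $x$ is the right-hand side of a premise; argument $i$ of $o$ is receiving if some variable $x$ is receiving in a term $t$ having a subterm $o(v_1,\dots,v_n)$ with $x$ occurring in $v_i$. $\mathcal{L}$ is simply WB cool if it is positive (no negative premises) and: (1) all operators are straight; (2) the only rules with $\tau$-premises are patience rules; (3) every active argument of an operator has a patience rule; (4) every receiving argument of an operator has a patience rule; (5) all operators are smooth. For a GSOS law $\lambda$ and $f:X\to TX$, $\lambda_X\circ\Sigma^{*}\langle\mathrm{id},f\rangle$ is a Kleisli endomorphism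 of $\Sigma^{*}X$. Continuity: for every $X$ and ascending chain $f_0\le f_1\le\cdots:X\to TX$, $\lambda_X\circ\Sigma^{*}\langle\mathrm{id},\bigvee_i f_i\rangle=\bigvee_i\lambda_X\circ\Sigma^{*}\langle\mathrm{id},f_i\rangle$. Unitality: for every $f:X\to TX$, $\lambda_X\circ\Sigma^{*}\langle\mathrm{id},\eta_X\vee f\rangle\le(\lambda_X\circ\Sigma^{*}\langle\mathrm{id},f\rangle)^{*}$. Observability: for every $f:X\to TX$, $\lambda_X\circ\Sigma^{*}\langle\mathrm{id},f\diamond f\rangle\le(\lambda_X\circ\Sigma^{*}\langle\mathrm{id},f\rangle)^{*}$. *)

(* Defs.v *)
From mathcomp Require Import all_boot.

Set Implicit Arguments.
Unset Strict Implicit.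
Unset Printing Implicit Defensive.

Inductive label (D : Type) : Type :=
| Act : D -> label D
| CoAct : D -> label D
| Tau : label D.
Arguments Tau {D}.

Inductive term (O : Type) (ar : O -> nat) (V : Type) : Type :=
| Var : V -> term ar V
| App : forall o : O, ('I_(ar o) -> term ar V) -> term ar V.
Arguments Var {O ar V}.
Arguments App {O ar V}.

Section Terms.
Variables (O : Type) (ar : O -> nat).

Fixpoint subst (V W : Type) (s : V -> term ar W) (t : term ar V) : term ar W :=
  match t with
  | Var v => s v
  | App o ts => App o (fun i => subst s (ts i))
  end.

Definition tmap (V W : Type) (g : V -> W) (t : term ar V) : term ar W :=
  subst (fun v => Var (g v)) t.

Inductive subterm (V : Type) (s : term ar V) : term ar V -> Prop :=
| st_refl : subterm s s
| st_app : forall o (ts : 'I_(ar o) -> term ar V) (i : 'I_(ar o)),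
    subterm s (ts i) -> subterm s (App o ts).

Definition occurs (V : Type) (x : V) (t : term ar V) : Prop := subterm (Var x) t.
End Terms.

(* ---------- GSOS rules ----------
   A rule for operator o (of arity n = ar o):
     positive premises  x_(fst (pos j)) --(snd (pos j))--> y_j   (j < npos)
     negative premises  x_(fst (neg k)) -/-(snd (neg k))->       (k < nneg)
     conclusion         o(x_0,...,x_(n-1)) --lab--> tgt
   where tgt is a term over the variables  inl i = x_i,  inr j = y_j.
   All variables are distinct by construction. *)
Record rule (D O : Type) (ar : O -> nat) (o : O) : Type := Rule {
  npos : nat;
  pos  : 'I_npos -> 'I_(ar o) * label D;
  nneg : nat;
  neg  : 'I_nneg -> 'I_(ar o) * label D;
  lab  : label D;
  tgt  : term ar ('I_(ar o) + 'I_npos)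
}.
Arguments npos {D O ar o} r.
Arguments pos {D O ar o} r j.
Arguments nneg {D O ar o} r.
Arguments neg {D O ar o} r k.
Arguments lab {D O ar o} r.
Arguments tgt {D O ar o} r.

Definition language (D O : Type) (ar : O -> nat) := forall o : O, rule D ar o -> Prop.

Definition countable_set (A : Type) (S : A -> Prop) : Prop :=
  exists g : nat -> option A, forall a, S a -> exists n, g n = Some a.

Section Law.
Variables (D O : Type) (ar : O -> nat) (L : language D ar).

(* Elements of T X = P_c(Delta_tau x X) are represented as predicates on
   label D * X; Kleisli arrows X -> T Y as X -> (label D * Y -> Prop). *)

(* The GSOS law  lambda_X : Sigma^*(X x T X) -> T Sigma^* X  induced by L
   (the inductive extension of the one-layer law rho, with rho = lambda . theta). *)
Fixpoint lam (X : Type) (t : term ar (X * (label D * X -> Prop)))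
  : label D * term ar X -> Prop :=
  match t with
  | Var xW => fun p => exists y, p.2 = Var y /\ xW.2 (p.1, y)
  | App o ts => fun p =>
      exists r : rule D ar o, L r /\
      exists ys : 'I_(npos r) -> term ar X,
        (forall j, lam (ts (pos r j).1) ((pos r j).2, ys j)) /\
        (forall k u, ~ lam (ts (neg r k).1) ((neg r k).2, u)) /\
        p.1 = lab r /\
        p.2 = subst (fun v => match v with
                              | inl i => tmap fst (ts i)
                              | inr j => ys j
                              end) (tgt r)
  end.

Definition lift (X : Type) (f : X -> label D * X -> Prop)
  : term ar X -> label D * term ar X -> Prop :=
  fun t => lam (tmap (fun x => (x, f x)) t).
End Law.

Section Kleisli.
Variable D : Type.

Definition keta (X : Type) : X -> label D * X -> Prop :=
  fun x p => p = (Tau, x).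

Definition kcomp (X Y Z : Type) (g : Y -> label D * Z -> Prop)
  (f : X -> label D * Y -> Prop) : X -> label D * Z -> Prop :=
  fun x p => exists d1 y d2,
    f x (d1, y) /\ g y (d2, p.2) /\
    ((d1 = Tau /\ p.1 = d2) \/ (d2 = Tau /\ p.1 = d1)).

Definition kle (X Y : Type) (f g : X -> label D * Y -> Prop) : Prop :=
  forall x p, f x p -> g x p.

Definition kjoin (X Y : Type) (f g : X -> label D * Y -> Prop)
  : X -> label D * Y -> Prop :=
  fun x p => f x p \/ g x p.

Fixpoint kpow (X : Type) (a : X -> label D * X -> Prop) (n : nat)
  : X -> label D * X -> Prop :=
  match n with
  | 0 => @keta X
  | n.+1 => kcomp a (kpow a n)
  end.

Definition rtclos (X : Type) (a : X -> label D * X -> Prop)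
  : X -> label D * X -> Prop :=
  fun x p => exists n, kpow (kjoin (@keta X) a) n x p.

Definition kcountable (X Y : Type) (f : X -> label D * Y -> Prop) : Prop :=
  forall x, countable_set (f x).
End Kleisli.

Section Props.
Variables (D O : Type) (ar : O -> nat) (L : language D ar).

Definition law_continuous : Prop :=
  forall (X : Type) (f : nat -> X -> label D * X -> Prop),
    (forall n, kcountable (f n)) ->
    (forall n, kle (f n) (f n.+1)) ->
    lift L (fun x p => exists n, f n x p) = (fun t p => exists n, lift L (f n) t p).

Definition law_unital : Prop :=
  forall (X : Type) (f : X -> label D * X -> Prop),
    kcountable f ->
    kle (lift L (kjoin (@keta D X) f)) (rtclos (lift L f)).

Definition law_observable : Prop :=
  forall (X : Type) (f : X -> label D * X -> Prop),
    kcountable f ->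
    kle (lift L (kcomp f f)) (rtclos (lift L f)).
End Props.

Section Format.
Variables (D O : Type) (ar : O -> nat) (L : language D ar).

Definition positive_lang : Prop :=
  forall o (r : rule D ar o), L r -> nneg r = 0.

Definition premise_lhs o (r : rule D ar o) (q : 'I_(npos r) + 'I_(nneg r)) : 'I_(ar o) :=
  match q with inl j => (pos r j).1 | inr k => (neg r k).1 end.

Definition straight_op (o : O) : Prop :=
  forall r : rule D ar o, L r -> injective (@premise_lhs o r).

Definition smooth_op (o : O) : Prop :=
  straight_op o /\
  forall r : rule D ar o, L r -> forall q : 'I_(npos r) + 'I_(nneg r), ~ occurs (inl (premise_lhs q)) (tgt r).

(* r is a patience rule for argument i of o:
     x_i --tau--> y   /   o(x_0..x_(n-1)) --tau--> o(x_0..x_(n-1))[y/x_i]  *)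
Definition patience_rule o (r : rule D ar o) (i : 'I_(ar o)) : Prop :=
  nneg r = 0 /\
  exists j : 'I_(npos r),
    (forall j', j' = j) /\
    pos r j = (i, Tau) /\
    lab r = Tau /\
    tgt r = App o (fun k => if k == i then Var (inr j) else Var (inl k)).

Definition has_patience_rule (o : O) (i : 'I_(ar o)) : Prop :=
  exists r : rule D ar o, L r /\ patience_rule r i.

Definition has_tau_premise o (r : rule D ar o) : Prop :=
  (exists j, (pos r j).2 = Tau) \/ (exists k, (neg r k).2 = Tau).

Definition active_arg (o : O) (i : 'I_(ar o)) : Prop :=
  exists (r : rule D ar o) (q : 'I_(npos r) + 'I_(nneg r)), L r /\ premise_lhs q = i.

Definition receiving_arg (o : O) (i : 'I_(ar o)) : Prop :=
  exists o' (r : rule D ar o') (j : 'I_(npos r)) (vs : 'I_(ar o) -> term ar ('I_(ar o') + 'I_(npos r))),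
    L r /\ subterm (App o vs) (tgt r) /\ occurs (inr j) (vs i).

Definition simply_WB_cool : Prop :=
  positive_lang /\
  (forall o, straight_op o) /\
  (forall o (r : rule D ar o), L r -> has_tau_premise r -> exists i, patience_rule r i) /\
  (forall (o : O) (i : 'I_(ar o)), active_arg i -> has_patience_rule i) /\
  (forall (o : O) (i : 'I_(ar o)), receiving_arg i -> has_patience_rule i) /\
  (forall o, smooth_op o).
End Format.

(* Main.v *)
From Stdlib Require Import FunctionalExtensionality PropExtensionality IndefiniteDescription Classical.
Require Import Defs.
From mathcomp Require Import all_boot.

Set Implicit Arguments.
Unset Strict Implicit.

Definition comb (D : Type) (d1 d2 d : label D) : Prop :=
  (d1 = Tau /\ d = d2) \/ (d2 = Tau /\ d = d1).

Inductive W (D X : Type) (g : X -> label D * X -> Prop) (x : X) : label D -> X -> Prop :=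
| W_refl : W g x Tau x
| W_step : forall d1 y d2 z d, W g x d1 y -> g y (d2, z) -> comb d1 d2 d -> W g x d z.

Lemma comb_tau (D : Type) (d1 d2 : label D) : comb d1 d2 Tau -> d1 = Tau /\ d2 = Tau.
Proof. by case=> [][-> <-]. Qed.

Lemma W_rt (D X : Type) (g : X -> label D * X -> Prop) x d z :
  W g x d z -> rtclos g x (d, z).
Proof.
elim=> [|d1 y d2 z' d' _ [n IH] Hg Hc]; first by exists 0.
exists n.+1; exists d1, y, d2; split; first exact: IH.
split; first by right. exact: Hc.
Qed.

Lemma W_one (D X : Type) (g : X -> label D * X -> Prop) x d y :
  g x (d, y) -> W g x d y.
Proof. move=> H; apply: W_step (W_refl _ _) H _; by left. Qed.

Lemma comb_assoc (D : Type) (d1 d2 d e1 e2 : label D) :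
  comb d1 d2 d -> comb e1 e2 d2 -> exists m, comb d1 e1 m /\ comb m e2 d.
Proof.
rewrite /comb; case=> [][? ?]; case=> [][? ?]; subst.
all: first [ by exists Tau; split; left | by eexists; split; [left|left]; split
           | by eexists; split; [left|right]; split | by eexists; split; [right|right]; split
           | by eexists; split; [right|left]; split ].
Qed.

Lemma W_trans (D X : Type) (g : X -> label D * X -> Prop) x d1 y d2 z d :
  W g x d1 y -> W g y d2 z -> comb d1 d2 d -> W g x d z.
Proof.
move=> H1 H2; elim: H2 d => [|e1 w e2 z' d2' Hw IH Hg Hc] d Hc'.
- by case: Hc' => [][? ?]; subst.
- have [m [Hm1 Hm2]] := comb_assoc Hc' Hc.
  exact: W_step (IH _ Hm1) Hg Hm2.
Qed.

Lemma W_vis (D X : Type) (g : X -> label D * X -> Prop) x d z :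
  W g x d z -> d <> Tau -> exists a b, W g x Tau a /\ g a (d, b) /\ W g b Tau z.
Proof.
elim=> [|d1 y d2 z' d' Hw IH Hg [[E1 E2]|[E1 E2]]] Hd //.
- by exists y, z'; subst; split=> //; split=> //; constructor.
- subst; have [a [b [H1 [H2 H3]]]] := IH Hd.
  exists a, b; split=> //; split=> //.
  apply: W_step H3 Hg _; by left.
Qed.

Lemma subst_occ (O : Type) (ar : O -> nat) (V X : Type) (s s' : V -> term ar X) t :
  (forall v, occurs v t -> s v = s' v) -> subst s t = subst s' t.
Proof.
elim: t => [v|o ts IH] H /=; first by apply: H; constructor.
congr App; apply: functional_extensionality => i; apply: IH => v Hv.
by apply: H; apply: st_app Hv.
Qed.

Lemma tmap_fst_pair (O : Type) (ar : O -> nat) (X Y : Type) (g : X -> Y) (t : term ar X) :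
  tmap fst (tmap (fun x => (x, g x)) t) = t.
Proof.
rewrite /tmap; elim: t => [v|o ts IH] //=.
by congr App; apply: functional_extensionality => i; apply: IH.
Qed.

Definition upd (n : nat) (T : Type) (ss : 'I_n -> T) (i : 'I_n) (a : T) : 'I_n -> T :=
  fun k => if k == i then a else ss k.

Lemma lift_App (D O : Type) (ar : O -> nat) (L : language D ar) (X : Type)
  (g : X -> label D * X -> Prop) o (ss : 'I_(ar o) -> term ar X) p :
  positive_lang L ->
  Defs.lift L g (App o ss) p <->
  exists r : rule D ar o, L _ r /\ exists ys : 'I_(npos r) -> term ar X,
    (forall j, Defs.lift L g (ss (pos r j).1) ((pos r j).2, ys j)) /\
    p = (lab r, subst (fun v => match v with inl i => ss i | inr j => ys j end) (tgt r)).
Proof.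
move=> Hpos; split.
- case=> r [Lr [ys [Hp [_ [H1 H2]]]]]; exists r; split=> //; exists ys; split=> //.
  case: p H1 H2 => a b /= -> ->; congr pair; apply: subst_occ => [[i|j]] _ //.
  exact: tmap_fst_pair.
- case=> r [Lr [ys [Hp ->]]]; exists r; split=> //; exists ys; split=> //; split.
  + move=> k; exfalso; have := Hpos _ r Lr; case: k => k Hk E; move: Hk; by rewrite E.
  split=> //=; apply: subst_occ => [[i|j]] _ //.
  by rewrite tmap_fst_pair.
Qed.

Lemma L0 (D O : Type) (ar : O -> nat) (L : language D ar) (X : Type)
  (f : X -> label D * X -> Prop) o (i : 'I_(ar o)) (ss : 'I_(ar o) -> term ar X) v w :
  positive_lang L -> has_patience_rule L i ->
  Defs.lift L f v (Tau, w) ->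
  Defs.lift L f (App o (upd ss i v)) (Tau, App o (upd ss i w)).
Proof.
move=> Hpos [r [Lr [Hn [j0 [Hu [Hp [Hl Ht]]]]]]] Hv.
apply/lift_App => //; exists r; split=> //; exists (fun _ => w); split.
- by move=> j; rewrite (Hu j) Hp /upd eqxx.
- rewrite Hl Ht /=; congr pair; congr App; apply: functional_extensionality => k.
  rewrite /upd; case E: (k == i) => /=; by rewrite ?E.
Qed.

Lemma L1 (D O : Type) (ar : O -> nat) (L : language D ar) (X : Type)
  (f : X -> label D * X -> Prop) o (i : 'I_(ar o)) (ss : 'I_(ar o) -> term ar X) u d u' :
  positive_lang L -> has_patience_rule L i ->
  W (Defs.lift L f) u d u' -> d = Tau ->
  W (Defs.lift L f) (App o (upd ss i u)) Tau (App o (upd ss i u')).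
Proof.
move=> Hpos Hpr; elim=> [|d1 y d2 z d' Hw IH Hg Hc] Hd; first by constructor.
subst; have [E1 E2] := comb_tau Hc; subst.
apply: (W_step (IH erefl) (L0 ss Hpos Hpr Hg)); by left.
Qed.

Lemma upd_id (n : nat) (T : Type) (ss : 'I_n -> T) i : upd ss i (ss i) = ss.
Proof. by apply: functional_extensionality => k; rewrite /upd; case: eqP => // ->. Qed.

Lemma L2 (D O : Type) (ar : O -> nat) (L : language D ar) (X : Type)
  (f : X -> label D * X -> Prop) o (u u' : 'I_(ar o) -> term ar X) :
  positive_lang L ->
  (forall k, u k = u' k \/ (has_patience_rule L k /\ W (Defs.lift L f) (u k) Tau (u' k))) ->
  W (Defs.lift L f) (App o u) Tau (App o u').
Proof.
move=> Hpos H.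
have Hm : forall m, W (Defs.lift L f) (App o u) Tau (App o (fun k => if k < m then u' k else u k)).
  elim=> [|m IH].
    have -> : (fun k : 'I_(ar o) => if k < 0 then u' k else u k) = u.
      by apply: functional_extensionality => k; rewrite ltn0.
    by constructor.
  case: (ltnP m (ar o)) => Hm; last first.
    have -> : (fun k : 'I_(ar o) => if k < m.+1 then u' k else u k) =
              (fun k : 'I_(ar o) => if k < m then u' k else u k).
      apply: functional_extensionality => k.
      by rewrite (leq_trans (ltn_ord k) Hm) (leq_trans (ltn_ord k) (leqW Hm)).
    exact: IH.
  set km := Ordinal Hm.
  set vm := (fun k : 'I_(ar o) => if k < m then u' k else u k).
  have E1 : (fun k : 'I_(ar o) => if k < m.+1 then u' k else u k) = upd vm km (u' km).
    apply: functional_extensionality => k; rewrite /upd /vm.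
    case: (eqVneq k km) => [->|Hne]; first by rewrite /= ltnSn.
    have Hk : (nat_of_ord k == m) = false.
      by apply/negbTE; move: Hne; apply: contra => /eqP Hk; apply/eqP/val_inj.
    by rewrite ltnS leq_eqVlt Hk.
  have E2 : vm km = u km by rewrite /vm /= ltnn.
  rewrite E1; case: (H km) => [Heq|[Hp Hw]].
    by rewrite -Heq -E2 upd_id.
  apply: W_trans IH _ _; last by left.
  have -> : (fun k : 'I_(ar o) => if k < m then u' k else u k) = upd vm km (u km).
    by rewrite -E2 upd_id.
  exact: (L1 vm Hpos Hp Hw erefl).
have -> : u' = (fun k => if k < ar o then u' k else u k).
  by apply: functional_extensionality => k; rewrite ltn_ord.
exact: Hm.
Qed.

Lemma L3 (D O : Type) (ar : O -> nat) (L : language D ar) (X : Type)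
  (f : X -> label D * X -> Prop) (V : Type) (Rv : V -> Prop) (t : term ar V)
  (s1 s2 : V -> term ar X) :
  positive_lang L ->
  (forall v, occurs v t -> s1 v = s2 v \/ (Rv v /\ W (Defs.lift L f) (s1 v) Tau (s2 v))) ->
  (forall o (vs : 'I_(ar o) -> term ar V) k v,
      subterm (App o vs) t -> occurs v (vs k) -> Rv v -> has_patience_rule L k) ->
  W (Defs.lift L f) (subst s1 t) Tau (subst s2 t).
Proof.
move=> Hpos; elim: t => [v|o ts IH] H1 H2 /=.
  by case: (H1 v (st_refl _)) => [->|[_ Hw]] //; constructor.
apply: L2 => // k.
case: (classic (exists v, occurs v (ts k) /\ Rv v)) => [[v [Hv HR]]|Hn].
  right; split; first exact: (H2 o ts k v (st_refl _) Hv HR).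
  apply: IH.
    by move=> v' Hv'; apply: H1; apply: st_app Hv'.
  by move=> o' vs k' v' Hs; apply: H2; apply: st_app Hs.
left; apply: subst_occ => v Hv.
case: (H1 v (st_app Hv)) => // [[HR _]].
by exfalso; apply: Hn; exists v.
Qed.

Lemma main_W (D O : Type) (ar : O -> nat) (L : language D ar) (X : Type)
  (f g : X -> label D * X -> Prop) :
  simply_WB_cool L ->
  (forall x d y, g x (d, y) -> W (Defs.lift L f) (Var x) d (Var y)) ->
  forall t p, Defs.lift L g t p -> W (Defs.lift L f) t p.1 p.2.
Proof.
case=> [Hpos [Hstr [Htau [Hact [Hrec Hsm]]]]] Hg t.
elim: t => [x|o ss IH] [d u].
  by case=> y /= [-> Hy]; apply: Hg.
move=> Hl; have [r [Lr [ys [Hp E]]]] := (lift_App _ _ _ Hpos).1 Hl.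
case: E => -> -> /=.
case: (classic (has_tau_premise r)) => Htp.
  have [i Hpi] := Htau _ r Lr Htp.
  have Hpr : has_patience_rule L i by exists r.
  case: Hpi => [Hn [j0 [Hu [Hp0 [Hl0 Ht]]]]].
  move: (Hp j0); rewrite Hp0 /= => /(IH i) /= Hw.
  rewrite Hl0 Ht /=.
  have -> : (fun k => subst (fun v => match v with inl i0 => ss i0 | inr j => ys j end)
               (if k == i then Var (inr j0) else Var (inl k))) = upd ss i (ys j0).
    apply: functional_extensionality => k; rewrite /upd; by case: (k == i).
  have := L1 ss Hpos Hpr Hw erefl; by rewrite upd_id.
have Hdec : forall j, exists ab : term ar X * term ar X,
    W (Defs.lift L f) (ss (pos r j).1) Tau ab.1 /\
    Defs.lift L f ab.1 ((pos r j).2, ab.2) /\ W (Defs.lift L f) ab.2 Tau (ys j).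
  move=> j; have Hw := IH _ _ (Hp j).
  have [a [b [h1 [h2 h3]]]] := W_vis Hw (fun E => Htp (or_introl (ex_intro _ j E))).
  by exists (a, b).
have [ab Hab] := functional_choice _ Hdec.
pose a' := fun k => match [pick j | (pos r j).1 == k] with Some j => (ab j).1 | None => ss k end.
pose s1 := fun v => match v with inl k => a' k | inr j => (ab j).2 end.
have S1 : W (Defs.lift L f) (App o ss) Tau (App o a').
  apply: L2 => // k; rewrite /a'; case: pickP => [j /eqP Ej|Hn]; last by left.
  right; split; first by apply: Hact; exists r, (inl j); split.
  by subst; exact: (Hab j).1.
have S2 : Defs.lift L f (App o a') (lab r, subst s1 (tgt r)).
  apply/(lift_App _ _ _ Hpos); exists r; split=> //; exists (fun j => (ab j).2); split=> //.
  move=> j; rewrite /a'; case: pickP => [j' /eqP Ej|Hn]; last by move: (Hn j); rewrite eqxx.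
  have E : j' = j by have := Hstr o r Lr (inl j') (inl j) Ej; case.
  by subst; exact: (Hab j).2.1.
have S3 : W (Defs.lift L f) (subst s1 (tgt r)) Tau
            (subst (fun v => match v with inl i => ss i | inr j => ys j end) (tgt r)).
  apply: (L3 (Rv := fun v => exists j, v = inr j)) => //.
    move=> [k|j] Hv /=.
      left; rewrite /a'; case: pickP => [j /eqP Ej|//].
      exfalso; have [_ Hs] := Hsm o; apply: (Hs r Lr (inl j)); by rewrite /= Ej.
    by right; split; [exists j | exact: (Hab j).2.2].
  move=> o' vs k v Hs Hv [j Ej]; subst; apply: Hrec; by exists o, r, j, vs.
apply: (W_trans S1 (W_trans (W_one S2) S3 _)); [by right | by left].
Qed.

Lemma lift_mono (D O : Type) (ar : O -> nat) (L : language D ar) (X : Type)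
  (g h : X -> label D * X -> Prop) :
  positive_lang L -> kle g h -> forall t p, Defs.lift L g t p -> Defs.lift L h t p.
Proof.
move=> Hpos Hgh t; elim: t => [x|o ss IH] [d u].
  by case=> y /= [-> Hy]; exists y; split=> //; apply: Hgh.
move=> Hl; have [r [Lr [ys [Hp E]]]] := (lift_App _ _ _ Hpos).1 Hl.
apply/(lift_App _ _ _ Hpos); exists r; split=> //; exists ys; split=> // j.
exact: IH.
Qed.

Lemma lift_sup (D O : Type) (ar : O -> nat) (L : language D ar) (X : Type)
  (f : nat -> X -> label D * X -> Prop) :
  positive_lang L -> (forall n, kle (f n) (f n.+1)) ->
  forall t p, Defs.lift L (fun x p => exists n, f n x p) t p -> exists n, Defs.lift L (f n) t p.
Proof.
move=> Hpos Hch.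
have Hmono : forall n m, n <= m -> kle (f n) (f m).
  move=> n; elim=> [|m IH]; first by rewrite leqn0 => /eqP ->.
  rewrite leq_eqVlt ltnS => /orP [/eqP ->|Hnm] //.
  by move=> x p Hx; apply: Hch; apply: IH.
move=> t; elim: t => [x|o ss IH] [d u].
  by case=> y /= [-> [n Hy]]; exists n, y.
move=> Hl; have [r [Lr [ys [Hp E]]]] := (lift_App _ _ _ Hpos).1 Hl.
have [N HN] := functional_choice _ (fun j => IH _ _ (Hp j)).
exists (\max_(j < npos r) N j).
apply/(lift_App _ _ _ Hpos); exists r; split=> //; exists ys; split=> // j.
have Hk := Hmono _ _ (@leq_bigmax _ N j). exact: (lift_mono Hpos Hk (HN j)).
Qed.

Theorem mainTheorem2 (D O : Type) (ar : O -> nat) (L : language D ar) :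
  simply_WB_cool L ->
  law_continuous L /\ law_unital L /\ law_observable L.
Proof.
move=> H; have Hpos : positive_lang L by case: H.
split; [|split].
- move=> X f _ Hch.
  apply: functional_extensionality => t; apply: functional_extensionality => p.
  apply: propositional_extensionality; split.
    exact: lift_sup.
  case=> n; apply: lift_mono => // x q Hq; by exists n.
- move=> X f _ t p Hl; case: p Hl => d u Hl; apply: W_rt.
  apply: (main_W H _ Hl) => x e y [E|Hf].
    by case: E => -> ->; constructor.
  by apply: W_one; exists y.
- move=> X f _ t p Hl; case: p Hl => d u Hl; apply: W_rt.
  apply: (main_W H _ Hl) => x e y [d1 [y1 [d2 [H1 [H2 Hc]]]]].
  apply: (W_step (W_one (_ : Defs.lift L f (Var x) (d1, Var y1)))
                 (_ : Defs.lift L f (Var y1) (d2, Var y)) Hc).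
  + by exists y1.
  + by exists y.
Qed.
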